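(* Fix $\theta$ with $1\le\theta\le 2.13$. For $r\in[4.999,5]$ let $q_r(x)=1-(r-\theta)x+(r-2\theta)x^2+\theta x^3$ and let $\gamma(r)$ be the unique root of $q_r$ in the interval $(0,0.56)$. Then $\gamma(r)$ is strictly decreasing in $r$ on $[4.999,5]$, and so is $\frac{1}{1-\gamma(r)}-\theta$.
   Context: For such $r,\theta$, the polynomial $q_r$ has exactly one root in $(0,0.56)$ and one root in $(0.56,1)$, and one root less than $-1$. *)

(* Defs.v *)
From Stdlib Require Import Reals Lra.
Open Scope R_scope.

Definition q (theta r x : R) : R :=
  1 - (r - theta) * x + (r - 2 * theta) * x ^ 2 + theta * x ^ 3.

Definition is_gamma (theta r g : R) : Prop :=
  0 < g < 56 / 100 /\ q theta r g = 0.

(* Main.v *)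
Require Import Defs.
From Stdlib Require Import Reals Lra Psatz.
Open Scope R_scope.

Lemma M2 x y : 0 < x -> x < 56/100 -> 0 < y -> y < 56/100 ->
  0 < 4999/1000*x*y*(1-x)*(1-y) + 1 - 2*(x+y) + x^2+x*y+y^2.
Proof. intros.
assert (0 <= (56/100-x)*(56/100-y)) by nra.
assert (0 <= x*y) by nra.
nra.
Qed.

Lemma M_pos x y r : 0 < x -> x < 56/100 -> 0 < y -> y < 56/100 -> 4999/1000 <= r ->
  0 < r*x*y*(1-x)*(1-y) + 1 - 2*(x+y) + x^2+x*y+y^2.
Proof. intros.
pose proof (M2 x y H H0 H1 H2).
assert (0 < x*y*(1-x)*(1-y)).
{ apply Rmult_lt_0_compat; [apply Rmult_lt_0_compat;[apply Rmult_lt_0_compat|]|]; lra. }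
assert (r*x*y*(1-x)*(1-y) >= 4999/1000*x*y*(1-x)*(1-y)).
{ replace (r*x*y*(1-x)*(1-y)) with (r*(x*y*(1-x)*(1-y))) by ring.
  replace (4999/1000*x*y*(1-x)*(1-y)) with (4999/1000*(x*y*(1-x)*(1-y))) by ring. nra. }
lra.
Qed.

Lemma key theta r x y : 4999/1000 <= r -> 0 < x -> x < y -> y < 56/100 ->
  q theta r x <= 0 -> q theta r y < 0.
Proof. intros.
pose proof (M_pos x y r H0 ltac:(lra) ltac:(lra) H2 H) as HM.
set (M := r*x*y*(1-x)*(1-y) + 1 - 2*(x+y) + x^2+x*y+y^2) in *.
assert (E : x*(1-x)^2 * q theta r y = y*(1-y)^2 * q theta r x - (y-x)*M).
{ unfold q, M; ring. }
assert (0 < x*(1-x)^2) by (apply Rmult_lt_0_compat; nra).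
assert (0 < y*(1-y)^2) by (apply Rmult_lt_0_compat; nra).
assert (0 < (y-x)*M) by (apply Rmult_lt_0_compat; lra).
assert (y*(1-y)^2 * q theta r x <= 0) by nra.
nra.
Qed.

Lemma qcont theta r : continuity (fun x => - q theta r x).
Proof. unfold q. reg. Qed.

Lemma uniq theta r a b : 4999/1000 <= r -> is_gamma theta r a -> is_gamma theta r b -> a = b.
Proof. intros H [Ha Qa] [Hb Qb].
destruct (Rtotal_order a b) as [h|[h|h]]; auto.
- pose proof (key theta r a b H ltac:(lra) h ltac:(lra) ltac:(lra)). lra.
- pose proof (key theta r b a H ltac:(lra) h ltac:(lra) ltac:(lra)). lra.
Qed.

Theorem mainTheorem9 (theta : R) :
  1 <= theta <= 213 / 100 ->
  (forall r, 4999 / 1000 <= r <= 5 -> exists! g, is_gamma theta r g) /\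
  (forall r1 r2 g1 g2,
      4999 / 1000 <= r1 -> r1 < r2 -> r2 <= 5 ->
      is_gamma theta r1 g1 -> is_gamma theta r2 g2 ->
      g2 < g1 /\ 1 / (1 - g2) - theta < 1 / (1 - g1) - theta).
Proof.
intros Ht. split.
- intros r Hr.
  assert (H0 : (fun x => - q theta r x) 0 < 0) by (cbv beta; unfold q; lra).
  assert (H1 : 0 < (fun x => - q theta r x) (56/100)) by (cbv beta; unfold q; lra).
  destruct (IVT _ 0 (56/100) (qcont theta r) ltac:(lra) H0 H1) as [z [Hz Qz]].
  cbv beta in Qz.
  assert (z <> 0) by (intro; subst; unfold q in Qz; lra).
  assert (z <> 56/100) by (intro; subst; unfold q in Qz; lra).
  exists z. split.
  + split; lra.
  + intros g Hg. apply (uniq theta r); auto; try lra. split; lra.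
- intros r1 r2 g1 g2 H1 H12 H2 [Hg1 Q1] [Hg2 Q2].
  assert (Q : q theta r2 g1 < 0).
  { assert (q theta r2 g1 = q theta r1 g1 - (r2-r1)*(g1*(1-g1))) by (unfold q; ring).
    assert (0 < (r2-r1)*(g1*(1-g1))) by (apply Rmult_lt_0_compat; nra). lra. }
  assert (g2 < g1).
  { destruct (Rtotal_order g2 g1) as [h|[h|h]]; auto.
    - subst; lra.
    - pose proof (key theta r2 g1 g2 ltac:(lra) ltac:(lra) h ltac:(lra) ltac:(lra)). lra. }
  split; auto.
  assert (1/(1-g2) < 1/(1-g1)).
  { apply Rmult_lt_reg_r with ((1-g1)*(1-g2)). nra.
    field_simplify; try lra. }
  lra.
Qed.
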